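(* Let $A$ be a non-empty set and $\phi\in\ell_1(A)$, regarded as the functional $\phi(x^* )=\sum_{a\in A}\phi(a)x^*(a)$ on $\ell_\infty(A)$. Then the function $g_\phi:\ell_\infty(A)\to\mathbb R_+$, $g_\phi(x^* )=|\phi(|x^*|)|$, belongs to $FBL[\ell_1(A)]$.
   Context: For a real Banach space $E$ with dual $E^*$ and closed unit ball $B_E$, let $H[E]$ be the vector space of all positively homogeneous functions $f:E^*\to\mathbb R$ ($f(\lambda x^* )=\lambda f(x^* )$ for $\lambda>0$). For $f\in H[E]$ put $\|f\|_{FBL[E]}:=\sup\{\sum_{k=1}^n|f(x_k^* )| : n\in\mathbb N,\ x_1^*,\dots,x_n^*\in E^*,\ \sup_{x\in B_E}\sum_{k=1}^n|x_k^*(x)|\le 1\}$. $H_0[E]:=\{f\in H[E]:\|f\|_{FBL[E]}<\infty\}$ is a Banach lattice with this norm and pointwise order/operations. For $x\in E$ let $\delta_x(x^* )=x^*(x)$. $FBL[E]$ is the closed sublattice of $H_0[E]$ generated by $\{\delta_x:x\in E\}$. Here $E=\ell_1(A)$ with $E^*$ identified with $\ell_\infty(A)$. *)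

(* Defs.v *)
From HB Require Import structures.
From mathcomp Require Import all_boot all_order all_algebra.
From mathcomp Require Import all_classical all_reals all_analysis.
Set Implicit Arguments. Unset Strict Implicit. Unset Printing Implicit Defensive.
Import Order.TTheory GRing.Theory Num.Theory.
Local Open Scope classical_set_scope.
Local Open Scope ring_scope.

Section FBL.
Variables (R : realType) (A : choiceType).

(* sum over A of a (possibly signed) family: sum of positive parts minus
   sum of negative parts (the usual unconditional sum for absolutely
   summable families) *)
Definition sumA (u : A -> R) : R :=
  fine ((\esum_(a in [set: A]) ((fun b => (u b)%:E)^\+ a))
        - (\esum_(a in [set: A]) ((fun b => (u b)%:E)^\- a)))%E.

Definition l1 (x : A -> R) : Prop := (\esum_(a in [set: A]) (`|x a|)%:E < +oo)%E.
Definition l1norm (x : A -> R) : \bar R := (\esum_(a in [set: A]) (`|x a|)%:E)%E.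

Definition linf (xs : A -> R) : Prop := exists M : R, forall a, `|xs a| <= M.

Definition pairing (xs x : A -> R) : R := sumA (fun a => xs a * x a).

Definition delta (x : A -> R) : (A -> R) -> R := fun xs => pairing xs x.

Definition posHom (f : (A -> R) -> R) : Prop :=
  forall xs, linf xs -> forall l : R, 0 < l ->
    f (fun a => l * xs a) = l * f xs.

Definition admissible (s : seq (A -> R)) : Prop :=
  (forall xs, xs \in s -> linf xs) /\
  (forall x, l1 x -> (l1norm x <= 1)%E ->
     \sum_(xs <- s) `|pairing xs x| <= 1).

Definition fblnorm (f : (A -> R) -> R) : \bar R :=
  ereal_sup [set (\sum_(xs <- s) `|f xs|)%:E | s in admissible].

Definition H0 (f : (A -> R) -> R) : Prop := posHom f /\ (fblnorm f < +oo)%E.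

Definition closed_sublattice (S : set ((A -> R) -> R)) : Prop :=
  [/\ S `<=` H0,
      S (fun _ => 0),
      (forall f g, S f -> S g -> S (fun xs => f xs + g xs)),
      (forall (c : R) f, S f -> S (fun xs => c * f xs)) &
      [/\ (forall f g, S f -> S g -> S (fun xs => Num.max (f xs) (g xs))),
      (forall f g, S f -> S g -> S (fun xs => Num.min (f xs) (g xs))) &
      (forall f, H0 f ->
         (forall e : R, 0 < e -> exists2 g, S g &
            (fblnorm (fun xs => (f xs - g xs)%R) < e%:E)%E) -> S f)]].

(* FBL[E]: the closed sublattice of H_0[E] generated by {delta_x : x in E},
   i.e. the intersection of all closed sublattices containing them *)
Definition FBL (f : (A -> R) -> R) : Prop :=
  forall S, closed_sublattice S -> (forall x, l1 x -> S (delta x)) -> S f.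

End FBL.

(* Main.v *)
Require Import Defs.
From HB Require Import structures.
From mathcomp Require Import all_boot all_order all_algebra.
From mathcomp Require Import all_classical all_reals all_analysis.
From mathcomp Require Import ring lra.
Import Order.TTheory GRing.Theory Num.Theory.
Local Open Scope classical_set_scope.
Local Open Scope ring_scope.
Set Implicit Arguments. Unset Strict Implicit. Unset Printing Implicit Defensive.

Section H.
Variables (R : realType) (A : choiceType).
Implicit Types (D : set A) (xs : A -> R).

Lemma esumZ D (r : R) (f : A -> \bar R) : 0 <= r -> (forall a, (0 <= f a)%E) ->
  (\esum_(a in D) (r%:E * f a) = r%:E * \esum_(a in D) f a)%E.
Proof.
move=> r0 f0; rewrite /esum -ereal_supZl//; last first.
  by apply/set0P; exists 0%E; exists set0; [exact: fsets_set0|rewrite fsbig_set0].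
congr ereal_sup; apply/seteqP; split=> x /=.
  by move=> [X XD <-]; exists (\sum_(i \in X) f i)%E; [exists X|rewrite ge0_mule_fsumr].
by move=> [_ [X XD <-] <-]; exists X => //; rewrite ge0_mule_fsumr.
Qed.

Lemma sumA_dec (u p q : A -> R) : (forall a, 0 <= p a) -> (forall a, 0 <= q a) ->
  (forall a, u a = p a - q a) ->
  (\esum_(a in [set: A]) (p a)%:E < +oo)%E -> (\esum_(a in [set: A]) (q a)%:E < +oo)%E ->
  ((sumA u)%:E = \esum_(a in [set: A]) (p a)%:E - \esum_(a in [set: A]) (q a)%:E)%E.
Proof.
move=> p0 q0 upq pf qf.
have sp : summable [set: A] (fun a => (p a)%:E).
  by rewrite /summable (eq_esum (b := fun a => (p a)%:E))// => a _; rewrite gee0_abs// lee_fin.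
have sq : summable [set: A] (fun a => (q a)%:E).
  by rewrite /summable (eq_esum (b := fun a => (q a)%:E))// => a _; rewrite gee0_abs// lee_fin.
have := esumB sp sq (fun a _ => p0 a : (0 <= (p a)%:E)%E) (fun a _ => q0 a : (0 <= (q a)%:E)%E).
have -> : ((fun a => (p a)%:E) \- (fun a => (q a)%:E))%E = (fun b => (u b)%:E).
  by apply/funext => b /=; rewrite upq EFinB.
rewrite /sumA => ->; rewrite fineK// fin_numB.
by rewrite !ge0_fin_numE ?pf ?qf//; apply: esum_ge0 => a _; rewrite lee_fin.
Qed.


Lemma esum_single (f : A -> \bar R) (a : A) : (forall b, b <> a -> f b = 0%E) ->
  (0 <= f a)%E -> (\esum_(b in [set: A]) f b = f a)%E.
Proof.
move=> f0 fa; rewrite (esumID [set a]); last first.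
  by move=> b _; have [->|/eqP/f0 ->] := eqVneq b a.
rewrite setTI esum_set1// esum1 ?adde0// => b [_ /= nba]; exact: f0.
Qed.

Definition ev (a : A) : A -> R := fun b => if b == a then 1 else 0.

Lemma esum_ev a : (\esum_(b in [set: A]) (`|ev a b|)%:E = 1%E).
Proof.
rewrite (esum_single (a := a)); first by rewrite /ev eqxx normr1.
  by move=> b /eqP nba; rewrite /ev (negbTE nba) normr0.
by rewrite lee_fin.
Qed.

Lemma l1_ev a : l1 (ev a).
Proof. by rewrite /l1 esum_ev ltry. Qed.

Lemma l1norm_ev a : (l1norm (ev a) <= 1)%E.
Proof. by rewrite /l1norm esum_ev. Qed.

Lemma maxdec (x : R) : x = Num.max x 0 - Num.max (- x) 0.
Proof.
have [h|h] := boolP (0 <= x).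
  have -> : Num.max x 0 = x by apply/max_idPl.
  have -> : Num.max (- x) 0 = 0 by apply/max_idPr; rewrite oppr_le0.
  by rewrite subr0.
rewrite -ltNge in h.
have -> : Num.max x 0 = 0 by apply/max_idPr; exact: ltW.
have -> : Num.max (- x) 0 = - x by apply/max_idPl; rewrite oppr_ge0 ltW.
by rewrite sub0r opprK.
Qed.

Lemma pairing_ev xs a : pairing xs (ev a) = xs a.
Proof.
apply/EFin_inj; rewrite /pairing.
have H c : (\esum_(b in [set: A]) ((ev a b) * Num.max (c b) 0)%:E = (Num.max (c a) 0)%:E)%E.
  rewrite (esum_single (a := a)); first by rewrite /ev eqxx mul1r.
    by move=> b /eqP nba; rewrite /ev (negbTE nba) mul0r.
  by rewrite lee_fin /ev eqxx mul1r le_max lexx orbT.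
rewrite (sumA_dec (p := fun b => ev a b * Num.max (xs b) 0) (q := fun b => ev a b * Num.max (- xs b) 0)).
- by rewrite H (H (fun b => - xs b)) -EFinB -maxdec.
- by move=> b; rewrite /ev; case: ifP; rewrite ?mul1r ?mul0r// le_max lexx orbT.
- by move=> b; rewrite /ev; case: ifP; rewrite ?mul1r ?mul0r// le_max lexx orbT.
- by move=> b; rewrite -mulrBr -maxdec mulrC.
- by rewrite H ltry.
- by rewrite (H (fun b => - xs b)) ltry.
Qed.

Lemma fine_le (E : \bar R) : (0 <= E)%E -> ((fine E)%:E <= E)%E.
Proof. by case: E. Qed.

Lemma linfM xs : linf xs -> exists2 M : R, 0 <= M & forall a, `|xs a| <= M.
Proof.
move=> [M HM]; exists (Num.max M 0); first by rewrite le_max lexx orbT.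
by move=> a; rewrite le_max HM.
Qed.

Variables (phi : A -> R) (hphi : l1 phi).

Definition pp b := Num.max (phi b) 0.
Definition pn b := Num.max (- phi b) 0.

Lemma pp_ge0 b : 0 <= pp b. Proof. by rewrite /pp le_max lexx orbT. Qed.
Lemma pn_ge0 b : 0 <= pn b. Proof. by rewrite /pn le_max lexx orbT. Qed.
Lemma pp_le b : pp b <= `|phi b|.
Proof. by rewrite /pp ge_max normr_ge0 ler_norm. Qed.
Lemma pn_le b : pn b <= `|phi b|.
Proof. by rewrite /pn ge_max normr_ge0 -normrN ler_norm. Qed.
Lemma phi_dec b : phi b = pp b - pn b. Proof. exact: maxdec. Qed.
Lemma absphi_dec b : `|phi b| = pp b + pn b.
Proof.
rewrite /pp /pn; have [h|h] := boolP (0 <= phi b).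
  have -> : Num.max (phi b) 0 = phi b by apply/max_idPl.
  have -> : Num.max (- phi b) 0 = 0 by apply/max_idPr; rewrite oppr_le0.
  by rewrite addr0 ger0_norm.
rewrite -ltNge in h.
have -> : Num.max (phi b) 0 = 0 by apply/max_idPr; exact: ltW.
have -> : Num.max (- phi b) 0 = - phi b by apply/max_idPl; rewrite oppr_ge0 ltW.
by rewrite add0r ltr0_norm.
Qed.

Lemma phi_fin : (\esum_(a in [set: A]) (`|phi a|)%:E \is a fin_num)%E.
Proof. by rewrite ge0_fin_numE//; apply: esum_ge0 => a _; rewrite lee_fin. Qed.

Lemma summ_w xs (c : A -> R) : linf xs -> (forall b, 0 <= c b) -> (forall b, c b <= `|phi b|) ->
  (\esum_(b in [set: A]) (`|xs b| * c b)%:E < +oo)%E.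
Proof.
move=> /linfM [M M0 HM] c0 cle.
apply: (@le_lt_trans _ _ (\esum_(b in [set: A]) (M%:E * (`|phi b|)%:E))%E).
  apply: le_esum => b _; rewrite -EFinM lee_fin.
  by apply: ler_pM => //; exact: HM.
rewrite esumZ//.
by rewrite -(fineK phi_fin) -EFinM ltry.
Qed.

Lemma pairing_dec xs : linf xs ->
  ((pairing (fun a => `|xs a|) phi)%:E =
   \esum_(b in [set: A]) (`|xs b| * pp b)%:E - \esum_(b in [set: A]) (`|xs b| * pn b)%:E)%E.
Proof.
move=> hxs; rewrite /pairing; apply: sumA_dec.
- by move=> b; rewrite mulr_ge0// pp_ge0.
- by move=> b; rewrite mulr_ge0// pn_ge0.
- by move=> b; rewrite -mulrBr -phi_dec.
- by apply: summ_w => // b; [exact: pp_ge0|exact: pp_le].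
- by apply: summ_w => // b; [exact: pn_ge0|exact: pn_le].
Qed.

Lemma split_esum xs X (c : A -> R) : finite_set X -> (forall b, 0 <= c b) ->
  (\esum_(b in [set: A]) (`|xs b| * c b)%:E =
   (\sum_(b \in X) `|xs b| * c b)%:E + \esum_(b in ~` X) (`|xs b| * c b)%:E)%E.
Proof.
move=> finX c0; rewrite (esumID X); last by move=> b _; rewrite lee_fin mulr_ge0.
rewrite !setTI esum_fset//; last by move=> b _; rewrite lee_fin mulr_ge0.
by rewrite fsumEFin.
Qed.

Lemma approx xs X : linf xs -> finite_set X ->
  `|pairing (fun a => `|xs a|) phi - \sum_(a \in X) phi a * `|xs a| |
    <= fine (\esum_(a in ~` X) (`|xs a| * `|phi a|)%:E)%E.
Proof.
move=> hxs finX.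
have hp := summ_w hxs pp_ge0 pp_le.
have hn := summ_w hxs pn_ge0 pn_le.
have := pairing_dec hxs.
rewrite (split_esum xs finX pp_ge0) (split_esum xs finX pn_ge0) in hp hn *.
set Ep := (\esum_(b in ~` X) _)%E in hp *.
set En := (\esum_(b in ~` X) _)%E in hn *.
have Ep0 : (0 <= Ep)%E by apply: esum_ge0 => b _; rewrite lee_fin mulr_ge0// pp_ge0.
have En0 : (0 <= En)%E by apply: esum_ge0 => b _; rewrite lee_fin mulr_ge0// pn_ge0.
have fEp : Ep \is a fin_num.
  rewrite ge0_fin_numE//; apply: le_lt_trans hp; rewrite leeDr// lee_fin.
  by rewrite fsbig_finite//= sumr_ge0// => b _; rewrite mulr_ge0// pp_ge0.
have fEn : En \is a fin_num.
  rewrite ge0_fin_numE//; apply: le_lt_trans hn; rewrite leeDr// lee_fin.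
  by rewrite fsbig_finite//= sumr_ge0// => b _; rewrite mulr_ge0// pn_ge0.
have -> : (\esum_(a in ~` X) (`|xs a| * `|phi a|)%:E = Ep + En)%E.
  rewrite -esumD; [|by move=> b _; rewrite lee_fin mulr_ge0// pp_ge0|by move=> b _; rewrite lee_fin mulr_ge0// pn_ge0].
  by apply: eq_esum => b _; rewrite absphi_dec mulrDr EFinD.
rewrite -(fineK fEp) -(fineK fEn) -!EFinD => H; have {H}H := EFin_inj H; rewrite H /=.
have ep0 := fine_ge0 Ep0; have en0 := fine_ge0 En0.
have -> : \sum_(a \in X) phi a * `|xs a| =
   \sum_(b \in X) `|xs b| * pp b - \sum_(b \in X) `|xs b| * pn b.
  rewrite !fsbig_finite//= -sumrB; apply: eq_bigr => b _.
  by rewrite -mulrBr -phi_dec mulrC.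
rewrite /=.
set sP := \sum_(b \in X) _; set sN := \sum_(b \in X) _.
have -> : sP + fine Ep - (sN + fine En) - (sP - sN) = fine Ep - fine En by ring.
rewrite ler_norml; apply/andP; split; lra.
Qed.

Lemma sum_bound (s : seq (A -> R)) D : admissible s ->
  (\sum_(xs <- s) (fine (\esum_(a in D) (`|xs a| * `|phi a|)%:E))%:E
    <= \esum_(a in D) (`|phi a|)%:E)%E.
Proof.
move=> adm.
apply: (@le_trans _ _ (\sum_(xs <- s) \esum_(a in D) (`|xs a| * `|phi a|)%:E)%E).
  apply: lee_sum => xs _; apply: fine_le; apply: esum_ge0 => a _.
  by rewrite lee_fin mulr_ge0.
rewrite -esum_sum; last by move=> a xs _ _; rewrite lee_fin mulr_ge0.
apply: le_esum => a _; rewrite sumEFin lee_fin -mulr_suml.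
apply: ler_piMl => //.
have := adm.2 (ev a) (l1_ev a) (l1norm_ev a).
by under eq_bigr do rewrite pairing_ev.
Qed.

Lemma fbl_bound X : finite_set X ->
  (fblnorm (fun xs => `|pairing (fun a => `|xs a|) phi| - `|\sum_(a \in X) phi a * `|xs a| |)%R
    <= \esum_(a in ~` X) (`|phi a|)%:E)%E.
Proof.
move=> finX; apply: ge_ereal_sup => _ [s adm <-].
apply: le_trans (sum_bound (~` X) adm).
rewrite sumEFin lee_fin big_seq [leRHS]big_seq; apply: ler_sum => xs xsin.
exact: le_trans (ler_dist_dist _ _) (approx (adm.1 xs xsin) finX).
Qed.

Lemma pairing_fin xs (c : A -> R) : linf xs -> (forall b, 0 <= c b) -> (forall b, c b <= `|phi b|) ->
  (\esum_(b in [set: A]) (`|xs b| * c b)%:E)%E \is a fin_num.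
Proof.
move=> hxs c0 cle; rewrite ge0_fin_numE; first exact: summ_w.
by apply: esum_ge0 => b _; rewrite lee_fin mulr_ge0.
Qed.

Lemma pairing_hom xs (l : R) : linf xs -> 0 < l ->
  pairing (fun a => `|l * xs a|) phi = l * pairing (fun a => `|xs a|) phi.
Proof.
move=> hxs l0.
have hl : linf (fun a => l * xs a).
  case: (linfM hxs) => M M0 HM; exists (l * M) => a.
  by rewrite normrM gtr0_norm// ler_pM2l.
apply: EFin_inj; rewrite pairing_dec// EFinM pairing_dec//.
have E c : (forall b, 0 <= c b) -> (\esum_(b in [set: A]) (`|l * xs b| * c b)%:E =
    l%:E * \esum_(b in [set: A]) (`|xs b| * c b)%:E)%E.
  move=> c0; rewrite -esumZ ?ltW//; last by move=> b; rewrite lee_fin mulr_ge0.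
  by apply: eq_esum => b _; rewrite -EFinM normrM gtr0_norm// mulrA.
rewrite (E _ pp_ge0) (E _ pn_ge0).
rewrite -(fineK (pairing_fin hxs pp_ge0 pp_le)) -(fineK (pairing_fin hxs pn_ge0 pn_le)).
by rewrite -!EFinM -!EFinB mulrBr.
Qed.

Lemma g_H0 : H0 (fun xs => `|pairing (fun a => `|xs a|) phi|).
Proof.
split.
  move=> xs hxs l l0; rewrite pairing_hom// normrM gtr0_norm//.
have -> : (fun xs => `|pairing (fun a => `|xs a|) phi|) =
  (fun xs => `|pairing (fun a => `|xs a|) phi| - `|\sum_(a \in set0) phi a * `|xs a| |).
  by apply/funext => xs; rewrite fsbig_set0 normr0 subr0.
apply: (le_lt_trans (fbl_bound (@finite_set0 A))).
by rewrite setC0; exact: hphi.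
Qed.

Lemma absmax (x : R) : `|x| = Num.max x (-1 * x).
Proof.
rewrite mulN1r; have [h|h] := boolP (0 <= x).
  rewrite ger0_norm//; by apply/esym/max_idPl; rewrite (le_trans _ h)// oppr_le0.
rewrite -ltNge in h; rewrite ltr0_norm//; apply/esym/max_idPr.
by rewrite (le_trans (ltW h))// oppr_ge0 ltW.
Qed.

End H.

Unset Implicit Arguments.
Set Strict Implicit.

Theorem lemma4p8 (R : realType) (A : choiceType) (a0 : A)
  (phi : A -> R) (hphi : l1 phi) :
  FBL (fun xs : A -> R => `|pairing (fun a => `|xs a|) phi|).
Proof.
move=> S [S0 Sz Sadd Sscal [Smax Smin Scl]] Sdelta.
have Sabs f : S f -> S (fun xs => `|f xs|).
  move=> Sf; have := Smax _ _ Sf (Sscal (-1) _ Sf).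
  suff -> : (fun xs => `|f xs|) = (fun xs => Num.max (f xs) (-1 * f xs)) by [].
  by apply/funext => xs; rewrite absmax.
have Sev a : S (fun xs : A -> R => xs a).
  have := Sdelta _ (@l1_ev R A a).
  suff -> : (fun xs : A -> R => xs a) = delta (@ev R A a) by [].
  by apply/funext => xs; rewrite /delta pairing_ev.
have Ssum (r : seq A) : S (fun xs : A -> R => \sum_(a <- r) phi a * `|xs a|).
  elim: r => [|a r IH].
    suff -> : (fun xs : A -> R => \sum_(a <- [::]) phi a * `|xs a|) = (fun _ => 0) by [].
    by apply/funext => xs; rewrite big_nil.
  have := Sadd _ _ (Sscal (phi a) _ (Sabs _ (Sev a))) IH.
  suff -> : (fun xs : A -> R => \sum_(b <- a :: r) phi b * `|xs b|) =
    (fun xs => phi a * `|xs a| + \sum_(b <- r) phi b * `|xs b|) by [].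
  by apply/funext => xs; rewrite big_cons.
apply: Scl; first exact: g_H0.
move=> e e0.
have fin := phi_fin hphi.
have : ((fine (\esum_(a in [set: A]) (`|phi a|)%:E) - e)%:E
          < \esum_(a in [set: A]) (`|phi a|)%:E)%E.
  by rewrite -{2}(fineK fin) lte_fin; lra.
rewrite {2}/esum => /ereal_sup_gt [_ [X [finX _] <-] HX].
exists (fun xs => `|\sum_(a \in X) phi a * `|xs a| |).
  suff -> : (fun xs : A -> R => `|\sum_(a \in X) phi a * `|xs a| |) =
     (fun xs => `|\sum_(a <- finmap.enum_fset (fset_set X)) phi a * `|xs a| |) by exact: Sabs _ (Ssum _).
  by apply/funext => xs; rewrite fsbig_finite.
apply: (le_lt_trans (fbl_bound hphi finX)).
have Hs : (\esum_(a in [set: A]) (`|phi a|)%:E =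
    (\sum_(a \in X) `|phi a|)%:E + \esum_(a in ~` X) (`|phi a|)%:E)%E.
  rewrite (esumID X); last by move=> b _; rewrite lee_fin.
  rewrite !setTI esum_fset//.
  by rewrite fsumEFin.
rewrite Hs in fin HX; rewrite (fsumEFin _ finX) in HX.
set Z := (\esum_(b in ~` X) _)%E in fin HX *.
have fZ : Z \is a fin_num.
  by move: fin; rewrite fin_numD => /andP[].
move: HX; rewrite -(fineK fZ) -EFinD /= lte_fin => HX.
rewrite lte_fin; lra.
Qed.
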